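(* Let $X$ be an element of the tensor algebra over $\mathbb{R}^d$ with strictly positive radius of convergence $\rho(X)>0$, and suppose $\pi_n(X)\neq 0$ for some $n\ge 0$. Then for every integer $k\ge n+1$ there exists a linear map $M\in\mathcal{L}(\mathbb{R}^d;\mathfrak{t}(k,\mathbb{R}))$ such that the series defining $\Phi_X(M)$ converges and $\Phi_X(M)\neq 0$.
   Context: Elements of the tensor algebra are (formal) sequences $X=(\pi_0(X),\pi_1(X),\dots)$ with $\pi_n(X)\in(\mathbb{R}^d)^{\otimes n}$, $(\mathbb{R}^d)^{\otimes0}=\mathbb{R}$. $\mathbb{R}^d$ carries the $\ell_1$-norm and each $(\mathbb{R}^d)^{\otimes n}$ the projective tensor norm. The radius of convergence $\rho(X)$ is the radius of convergence of the complex power series $\lambda\mapsto\sum_{n\ge0}\|\pi_n(X)\|\lambda^n$. $\mathfrak{t}(k,\mathbb{R})$ is the space of real $k\times k$ matrices $M$ with $M+M^\top=0$ whose $(i,j)$-entry can be nonzero only if $|i-j|=1$ (tridiagonal antisymmetric matrices). For a linear map $M:\mathbb{R}^d\to\mathfrak{t}(k,\mathbb{R})\subset\mathfrak{gl}(k,\mathbb{C})$, $\widetilde M$ is the algebra homomorphism with $\widetilde M(1)=I_k$ and $\widetilde M(e_{i_1}\otimes\cdots\otimes e_{i_\ell})=M(e_{i_1})\cdots M(e_{i_\ell})$, and the generating function is $\Phi_X(M)=\sum_{n\ge0}\widetilde M(\pi_n(X))$ (Hilbert–Schmidt norm on matrices), defined when this series converges. *)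

(* Defs.v *)
From HB Require Import structures.
From mathcomp Require Import all_boot all_order all_algebra.
From mathcomp Require Import all_classical all_reals all_analysis.
Set Implicit Arguments. Unset Strict Implicit. Unset Printing Implicit Defensive.
Import Order.TTheory GRing.Theory Num.Theory.
Import numFieldNormedType.Exports.
Local Open Scope classical_set_scope.
Local Open Scope ring_scope.

(* (R^d)^{(x) n} is identified with functions on words of length n:
   x = \sum_w x w e_{w_0} (x) ... (x) e_{w_{n-1}}. *)
Definition tensor (R : realType) (d n : nat) := n.-tuple 'I_d -> R.

(* An element X of the tensor algebra: pi_n(X) = X n. *)
Definition tensor_seq (R : realType) (d : nat) := forall n : nat, tensor R d n.

Definition l1norm (R : realType) (d : nat) (u : 'I_d -> R) : R :=
  \sum_(i < d) `|u i|.

Definition elem_tensor (R : realType) (d n : nat) (c : R)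
  (v : 'I_n -> 'I_d -> R) : tensor R d n :=
  fun w => c * \prod_(l < n) v l (tnth w l).

Definition proj_norm (R : realType) (d n : nat) (x : tensor R d n) : R :=
  inf [set s : R | exists (m : nat) (c : 'I_m -> R)
         (v : 'I_m -> 'I_n -> 'I_d -> R),
         (forall w, x w = \sum_(j < m) elem_tensor (c j) (v j) w) /\
         s = \sum_(j < m) `|c j| * \prod_(l < n) l1norm (v j l)].

Definition conv_radius (R : realType) (d : nat) (X : tensor_seq R d) : \bar R :=
  ereal_sup [set r%:E | r in [set r : R | 0 <= r /\
     cvg ((series (fun n : nat => proj_norm (X n) * r ^+ n)) @ \oo)]].

Definition tridiag_antisym (R : realType) (k : nat) (A : 'M[R]_k) : Prop :=
  A + A^T = 0 /\ (forall i j : 'I_k, `|(i : int) - (j : int)| != 1%N -> A i j = 0).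

Definition basis_vec (R : realType) (d : nat) (i : 'I_d) : 'rV[R]_d :=
  delta_mx 0 i.

Definition Mtilde (R : realType) (d k n : nat)
  (M : 'rV[R]_d -> 'M[R]_k) (x : tensor R d n) : 'M[R]_k :=
  \sum_(w : n.-tuple 'I_d) x w *: \prod_(l < n) M (basis_vec R (tnth w l)).

Definition Phi_partial (R : realType) (d k : nat)
  (X : tensor_seq R d) (M : 'rV[R]_d -> 'M[R]_k) : nat -> 'M[R]_k :=
  series (fun n => Mtilde M (X n)).

(* Phi_X(M), meaningful when the series converges. *)
Definition Phi_X (R : realType) (d k : nat)
  (X : tensor_seq R d) (M : 'rV[R]_d -> 'M[R]_k) : 'M[R]_k :=
  lim (Phi_partial X M @ \oo).

(* Main.v *)
Require Import Defs.
From HB Require Import structures.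
From mathcomp Require Import all_boot all_order all_algebra.
From mathcomp Require Import all_classical all_reals all_analysis.
From mathcomp Require Import ring lra zify.
Import Order.TTheory GRing.Theory Num.Theory.
Import numFieldNormedType.Exports.
Local Open Scope classical_set_scope.
Local Open Scope ring_scope.

Definition Emat (R : realType) (k l : nat) : 'M[R]_k :=
  \matrix_(i, j) (((j == l.+1 :> nat) && (i == l :> nat))%:R
                 - ((i == l.+1 :> nat) && (j == l :> nat))%:R).

Definition Mfun (R : realType) (d k n : nat) (c : R) (ws : n.-tuple 'I_d)
  (v : 'rV[R]_d) : 'M[R]_k :=
  \sum_(l < n) (c * v 0 (tnth ws l)) *: Emat R k l.

Lemma Mfun_linear (R : realType) (d k n : nat) (c : R) (ws : n.-tuple 'I_d) :
  linear (@Mfun R d k n c ws).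
Proof.
move=> a u v; rewrite /Mfun scaler_sumr -big_split; apply: eq_bigr => l _ /=.
rewrite !mxE scalerA -scalerDl; congr (_ *: _); ring.
Qed.

HB.instance Definition _ (R : realType) (d k n : nat) (c : R) (ws : n.-tuple 'I_d) :=
  GRing.isLinear.Build R 'rV[R]_d 'M[R]_k _ (@Mfun R d k n c ws) (@Mfun_linear R d k n c ws).

Lemma Mfun_tridiag (R : realType) (d k n : nat) (c : R) (ws : n.-tuple 'I_d) v :
  tridiag_antisym (@Mfun R d k n c ws v).
Proof.
split.
  apply/matrixP => i j; rewrite !mxE /Mfun !summxE -big_split big1 // => l _.
  rewrite !mxE /=; ring.
move=> i j H; rewrite /Mfun summxE big1 // => l _; rewrite !mxE.
case E1: (_ && _); case E2: (_ && _); rewrite ?subrr ?mulr0 //.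
all: exfalso; move: H E1 E2; lia.
Qed.

Definition band (R : realType) (k m : nat) (A : 'M[R]_k) :=
  forall i j : 'I_k, (m < j - i)%N || (m < i - j)%N -> A i j = 0.
Arguments band {R k} m A.

Lemma Mfun_band (R : realType) (d k n : nat) (c : R) (ws : n.-tuple 'I_d) v :
  band 1 (@Mfun R d k n c ws v).
Proof.
move=> i j H; rewrite /Mfun summxE big1 // => l _; rewrite !mxE.
case E1: (_ && _); case E2: (_ && _); rewrite ?subrr ?mulr0 //.
all: exfalso; move: H E1 E2; lia.
Qed.

Lemma band_mul (R : realType) (k m : nat) (A B : 'M[R]_k) :
  band m A -> band 1 B -> band m.+1 (A *m B).
Proof.
move=> HA HB i j H; rewrite mxE big1 // => l _.
have [H1|H1] := boolP ((m < l - i)%N || (m < i - l)%N); first by rewrite HA // mul0r.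
rewrite HB ?mulr0 //; move: H H1; lia.
Qed.

Lemma prod_band (R : realType) (k m : nat) (N : nat -> 'M[R]_k.+1) :
  (forall l, band 1 (N l)) -> band m (\prod_(l < m) N l).
Proof.
move=> HN; elim: m => [|m IH].
  move=> i j H; rewrite big_ord0 mxE; case: eqP => // Hij; subst; move: H; lia.
by rewrite big_ord_recr /= -mulmxE; apply: band_mul.
Qed.

Lemma mulE (R : realType) (k : nat) (A B : 'M[R]_k.+1) i j :
  (A * B) i j = \sum_l A i l * B l j.
Proof. by rewrite -mulmxE mxE. Qed.

Lemma prod_diag (R : realType) (k : nat) (N : nat -> 'M[R]_k.+1) :
  (forall l, band 1 (N l)) -> forall m, (m < k.+1)%N ->
  (\prod_(l < m) N l) (inord 0) (inord m) =
  \prod_(l < m) N l (inord l) (inord l.+1).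
Proof.
move=> HN; elim => [|m IH] Hm.
  by rewrite !big_ord0 mxE eqxx.
rewrite !big_ord_recr /= mulE (bigD1 (inord m)) //= IH ?(ltnW Hm) //.
rewrite [X in _ + X = _]big1 ?addr0 // => j Hj.
have Hj' : (j : nat) != m.
  apply: contra Hj => /eqP <-; apply/eqP/val_inj; rewrite /= inordK //.
have [Hjm|Hjm] := ltnP j m.
  rewrite (HN m j (inord m.+1)) ?mulr0 // inordK //; apply/orP; left; lia.
rewrite (@prod_band R k m N HN (inord 0) j) ?mul0r // inordK //; apply/orP; left; lia.
Qed.

Lemma mulE' (R : realType) (k : nat) (A B : 'M[R]_k.+1) i j :
  (A * B) i j = \sum_l A i l * B l j.
Proof. by rewrite -mulmxE mxE. Qed.

Lemma basis_entry (R : realType) (d : nat) (e x : 'I_d) :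
  basis_vec R e 0 x = (x == e)%:R.
Proof. by rewrite /basis_vec mxE eqxx. Qed.

Lemma Mfun_super (R : realType) (d k n : nat) (c : R) (ws : n.-tuple 'I_d)
  (e : 'I_d) (l : 'I_n) : (n < k.+1)%N ->
  @Mfun R d k.+1 n c ws (basis_vec R e) (inord l) (inord l.+1) =
  c * (tnth ws l == e)%:R.
Proof.
move=> Hn.
have Hl1 : (l < k.+1)%N by have := ltn_ord l; lia.
have Hl2 : (l.+1 < k.+1)%N by have := ltn_ord l; lia.
rewrite /Mfun summxE (bigD1 l) //= [X in _ + X]big1 ?addr0.
  rewrite !mxE !inordK // !eqxx /=.
  have -> : ((l : nat) == l.+1) = false by lia.
  by rewrite /= subr0 mulr1.
move=> l' Hl'; rewrite !mxE !inordK //.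
have -> : ((l.+1 == l'.+1) && ((l : nat) == l')) = false.
  by apply/negbTE; apply: contra Hl' => /andP[_ /eqP H]; apply/eqP/val_inj.
have -> : (((l : nat) == l'.+1) && (l.+1 == l')) = false by apply/negbTE; lia.
by rewrite subrr mulr0.
Qed.

Lemma Mfun_bound (R : realType) (d k n : nat) (c : R) (ws : n.-tuple 'I_d)
  (e : 'I_d) i j : 0 <= c ->
  `|@Mfun R d k n c ws (basis_vec R e) i j| <= (2 * c) *+ n.
Proof.
move=> c0; rewrite /Mfun summxE.
apply: le_trans (ler_norm_sum _ _ _) _.
rewrite -[X in _ <= _ *+ X]card_ord -sumr_const; apply: ler_sum => l _.
rewrite !mxE eqxx /= !normrM (ger0_norm c0).
have H1 : `|((tnth ws l == e)%:R : R)| <= 1 by case: (_ == _); rewrite ?normr1 ?normr0.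
have H2 : `|((((j == l.+1 :> nat) && (i == l :> nat))%:R
                 - ((i == l.+1 :> nat) && (j == l :> nat))%:R) : R)| <= 2.
  by case: (_ && _); case: (_ && _); rewrite ?subrr ?normr0 ?subr0 ?sub0r ?normrN ?normr1 //; lra.
have := normr_ge0 ((tnth ws l == e)%:R : R).
have := normr_ge0 ((((j == l.+1 :> nat) && (i == l :> nat))%:R
                 - ((i == l.+1 :> nat) && (j == l :> nat))%:R) : R).
move=> Hb Ha; rewrite -mulrA [X in _ <= X]mulrC; apply: ler_wpM2l => //.
by rewrite -[2]mul1r; apply: ler_pM.
Qed.

Lemma prod_bound (R : realType) (k : nat) (N : nat -> 'M[R]_k.+1) (b : R) :
  0 <= b -> (forall l i j, `|N l i j| <= b) ->
  forall m i j, `|(\prod_(l < m) N l) i j| <= (k.+1%:R * b) ^+ m.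
Proof.
move=> b0 HN; elim => [|m IH] i j.
  by rewrite big_ord0 mxE expr0; case: (_ == _); rewrite ?normr1 ?normr0.
rewrite big_ord_recr /= mulE'.
apply: le_trans (ler_norm_sum _ _ _) _.
apply: (@le_trans _ _ (\sum_(l < k.+1) ((k.+1%:R * b) ^+ m * b))).
  apply: ler_sum => l _; rewrite normrM; apply: ler_pM => //.
rewrite sumr_const card_ord -mulr_natl exprSr le_eqVlt; apply/orP; left; apply/eqP; ring.
Qed.

Lemma Mtilde_entry (R : realType) (d k m : nat) (M : 'rV[R]_d -> 'M[R]_k)
  (x : tensor R d m) i j :
  Mtilde M x i j = \sum_(w : m.-tuple 'I_d) x w * (\prod_(l < m) M (basis_vec R (tnth w l))) i j.
Proof. by rewrite /Mtilde summxE; apply: eq_bigr => w _; rewrite mxE. Qed.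

Lemma prod_ind (R : realType) (d m : nat) (w u : m.-tuple 'I_d) :
  \prod_(l < m) ((tnth w l == tnth u l)%:R : R) = (w == u)%:R.
Proof.
case: eqP => [->|Hne]; first by rewrite big1 // => l _; rewrite eqxx.
case: (pickP (fun l => tnth w l != tnth u l)) => [l Hl|H].
  by rewrite (bigD1 l) //= (negbTE Hl) mul0r.
exfalso; apply: Hne; apply: eq_from_tnth => l; by move: (H l) => /negbFE/eqP.
Qed.

Lemma pn_props (R : realType) (d m : nat) (x : tensor R d m) :
  0 <= proj_norm x /\ forall w, `|x w| <= proj_norm x.
Proof.
have Hne : nonempty [set s : R | exists (p : nat) (c : 'I_p -> R)
         (v : 'I_p -> 'I_m -> 'I_d -> R),
         (forall w, x w = \sum_(j < p) elem_tensor (c j) (v j) w) /\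
         s = \sum_(j < p) `|c j| * \prod_(l < m) l1norm (v j l)].
  eexists; exists #|{: m.-tuple 'I_d}|, (fun j => x (enum_val j)),
    (fun j l i => (i == tnth (enum_val j) l)%:R); split => // w.
  rewrite /elem_tensor (bigD1 (enum_rank w)) //= enum_rankK prod_ind eqxx mulr1.
  rewrite big1 ?addr0 // => j Hj; rewrite prod_ind.
  have -> : (w == enum_val j) = false.
    apply/negbTE; apply: contra Hj => /eqP ->; by rewrite enum_valK.
  by rewrite mulr0.
split.
  rewrite /proj_norm; apply: lb_le_inf => // s [p [c [v [_ ->]]]].
  apply: sumr_ge0 => j _; apply: mulr_ge0 => //; apply: prodr_ge0 => l _.
  by apply: sumr_ge0.
move=> w; rewrite /proj_norm; apply: lb_le_inf => // s [p [c [v [Hx ->]]]].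
rewrite Hx /elem_tensor; apply: le_trans (ler_norm_sum _ _ _) _.
apply: ler_sum => j _; rewrite normrM normr_prod; apply: ler_wpM2l => //.
apply: ler_prod => l _; rewrite normr_ge0 /=.
by rewrite /l1norm (bigD1 (tnth w l)) //= lerDl sumr_ge0.
Qed.

Lemma mx_normed_cvg (R : realType) (k : nat) (u_ : nat -> 'M[R]_k) :
  cvgn [normed series u_] -> cvgn (series u_).
Proof.
move=> /cauchy_cvgP/cauchy_seriesP u_ncvg.
apply/(@cauchy_cvgP 'M[R]_k)/cauchy_seriesP => e /u_ncvg.
apply: filterS => n /=; rewrite ger0_norm ?sumr_ge0//.
by apply: le_lt_trans; apply: ler_norm_sum.
Qed.

Lemma mx_entry_le (R : realType) (k : nat) (A : 'M[R]_k) i j : `|A i j| <= `|A|.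
Proof.
rewrite [leRHS]/Num.norm /= mx_normrE. apply/bigmax_geP; right => /=; by exists (i,j).
Qed.

Lemma mx_norm_le (R : realType) (k : nat) (A : 'M[R]_k) c :
  0 <= c -> (forall i j, `|A i j| <= c) -> `|A| <= c.
Proof.
move=> c0 H. rewrite [leLHS]/Num.norm /= mx_normrE.
apply/bigmax_leP; split => // -[i j] _ /=; exact: H.
Qed.

Lemma mx_entry_cvg (R : realType) (k : nat) (f : nat -> 'M[R]_k) (L : 'M[R]_k) i j :
  f @ \oo --> L -> (fun N => f N i j) @ \oo --> L i j.
Proof.
move=> /cvgrPdist_le H; apply/cvgrPdist_le => e e0.
near=> N.
rewrite (_ : L i j - f N i j = (L - f N) i j); last by rewrite !mxE.
apply: le_trans (@mx_entry_le _ _ _ i j) _.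
near: N; exact: H.
Unshelve. all: by end_near.
Qed.

Theorem corollary1p9 (R : realType) (d : nat) (X : tensor_seq R d) (n : nat) :
  (0 < conv_radius X)%E ->
  (exists w : n.-tuple 'I_d, X n w != 0) ->
  forall k : nat, (n.+1 <= k)%N ->
  exists M : {linear 'rV[R]_d -> 'M[R]_k},
    (forall v, tridiag_antisym (M v)) /\
    cvg (Phi_partial X M @ \oo) /\
    Phi_X X M != 0.
Proof.
move=> Hr [ws Hws] k Hk.
case: k Hk => [//|k] Hk.
have [r [r0 Hcv]] : exists r : R, 0 < r /\
    cvgn (series (fun m => proj_norm (X m) * r ^+ m)).
  case/ereal_sup_gt: Hr => _ [r [r0' Hc] <-]; rewrite lte_fin => r0; by exists r.
pose P m := proj_norm (X m).
have P0 m : 0 <= P m by case: (@pn_props _ _ _ (X m)).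
have Pw m w : `|X m w| <= P m by case: (@pn_props _ _ _ (X m)) => _; apply.
pose u m := P m * r ^+ m.
have u0 m : 0 <= u m by rewrite /u mulr_ge0 // exprn_ge0 // ltW.
pose S := limn (series u).
have HS N : series u N <= S.
  apply: nondecreasing_cvgn_le => //.
  by move=> a b Hab; apply: nondecreasing_series => // ? _ _; exact: u0.
have S0 : 0 <= S by apply: le_trans (HS 0%N); rewrite /series /= big_geq.
pose a := X n ws.
have a0 : 0 < `|a| by rewrite normr_gt0.
pose D : R := d%:R * (k.+1%:R * (2 *+ n)).
have D0 : 0 <= D by rewrite /D !mulr_ge0 // ?ler0n // mulrn_wge0.
have D1 : 0 < D + 1 by lra.
pose Q := (r / (D + 1)) ^+ n * `|a|.
have Q0 : 0 < Q by rewrite /Q mulr_gt0 // exprn_gt0 // divr_gt0.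
pose t := Q + S + 1.
have t0 : 0 < t by rewrite /t; lra.
pose rho := Q / t.
have rho0 : 0 < rho by rewrite /rho divr_gt0.
have rhot : rho * t = Q by rewrite /rho mulrVK // unitfE gt_eqF.
have rho1 : rho <= 1 by move: rhot; rewrite /t; nra.
have rhoS : rho * S < Q by move: rhot; rewrite /t; nra.
pose c := rho * (r / (D + 1)).
have c0 : 0 < c by rewrite /c mulr_gt0 // divr_gt0.
have cD : c * (D + 1) = rho * r by rewrite /c -mulrA divfK // gt_eqF.
have Dcr : D * c <= rho * r by move: cD; nra.
have Dcr' : D * c <= r by move: Dcr; nra.
pose b := (2 * c) *+ n.
have b0 : 0 <= b by rewrite /b mulrn_wge0 // mulr_ge0 // ltW.
pose Mf := @Mfun R d k.+1 n c ws.
exists (GRing.Linear.clone _ _ _ _ Mf _).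
split; first by move=> v; exact: Mfun_tridiag.
have Phi_eq : Phi_partial X (GRing.Linear.clone _ _ _ _ Mf _) =
              series (fun m => Mtilde Mf (X m)) by [].
pose Nw m (w : m.-tuple 'I_d) (l : nat) : 'M[R]_k.+1 :=
  oapp (fun l' : 'I_m => Mf (basis_vec R (tnth w l'))) 0 (insub l).
have prod_eq m (w : m.-tuple 'I_d) :
    \prod_(l < m) Mf (basis_vec R (tnth w l)) = \prod_(l < m) Nw m w l.
  by apply: eq_bigr => l _; rewrite /Nw (valK l).
have HNband m w l : band 1 (Nw m w l).
  rewrite /Nw; case: insub => [l'|] /=; first exact: Mfun_band.
  by move=> i j _; rewrite mxE.
have HNbound m w l i j : `|Nw m w l i j| <= b.
  rewrite /Nw; case: insub => [l'|] /=; first exact: (@Mfun_bound _ _ _ _ _ _ _ _ _ (ltW c0)).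
  by rewrite mxE normr0.
have HA m i j : `|Mtilde Mf (X m) i j| <= (D * c) ^+ m * P m.
  rewrite Mtilde_entry; apply: le_trans (ler_norm_sum _ _ _) _.
  apply: (@le_trans _ _ (\sum_(w : m.-tuple 'I_d) (P m * (k.+1%:R * b) ^+ m))).
    apply: ler_sum => w _; rewrite normrM; apply: ler_pM => //.
    by rewrite prod_eq; apply: prod_bound.
  rewrite sumr_const card_tuple card_ord -(mulr_natl (P m * (k.+1%:R * b) ^+ m) (d ^ m)) natrX /D /b.
  rewrite le_eqVlt; apply/orP; left; apply/eqP.
  rewrite -[2 * c *+ n]mulr_natr -[2 *+ n]mulr_natr.
  move: (P m) (c) => pm cc.
  rewrite (_ : k.+1%:R * (2 * cc * n%:R) = k.+1%:R * (2 * n%:R) * cc); last by ring.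
  by rewrite !exprMn; ring.
have Hcvg : cvg (Phi_partial X (GRing.Linear.clone _ _ _ _ Mf _) @ \oo).
  rewrite Phi_eq; apply: mx_normed_cvg.
  apply: (@series_le_cvg R _ u); [by move=> m /=| exact: u0 | | exact: Hcv].
  move=> m /=; apply: (@le_trans _ _ ((D * c) ^+ m * P m)).
    apply: mx_norm_le; first by rewrite mulr_ge0 // exprn_ge0 // mulr_ge0 // ltW.
    exact: HA.
  rewrite /u mulrC; apply: ler_wpM2l => //; apply: lerXn2r => //.
    by rewrite nnegrE mulr_ge0 // ltW.
  by rewrite nnegrE ltW.
split => //.
pose L := Phi_X X (GRing.Linear.clone _ _ _ _ Mf _).
have HL : Phi_partial X (GRing.Linear.clone _ _ _ _ Mf _) @ \oo --> L := Hcvg.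
rewrite Phi_eq in HL.
have He := @mx_entry_cvg _ _ _ _ (inord 0) (inord n) HL.
have Hlow m : (m < n)%N -> Mtilde Mf (X m) (inord 0) (inord n) = 0.
  move=> Hm; rewrite Mtilde_entry big1 // => w _.
  rewrite prod_eq (@prod_band R k m (Nw m w) (HNband m w)) ?mulr0 //.
  have i0 : ((inord 0 : 'I_k.+1) : nat) = 0%N by rewrite inordK.
  have iN : ((inord n : 'I_k.+1) : nat) = n by rewrite inordK.
  by rewrite i0 iN subn0 Hm.
have Hdiag (w : n.-tuple 'I_d) :
    (\prod_(l < n) Mf (basis_vec R (tnth w l))) (inord 0) (inord n)
    = c ^+ n * (ws == w)%:R.
  rewrite prod_eq (@prod_diag R k (Nw n w) (HNband n w) n Hk).
  rewrite (eq_bigr (fun l : 'I_n => c * (tnth ws l == tnth w l)%:R)); last first.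
    by move=> l _; rewrite /Nw (valK l) /= Mfun_super.
  by rewrite big_split /= prodr_const card_ord prod_ind.
have Hmid : Mtilde Mf (X n) (inord 0) (inord n) = c ^+ n * a.
  rewrite Mtilde_entry (bigD1 ws) //= Hdiag eqxx mulr1 [X in _ + X]big1 ?addr0.
    by rewrite mulrC.
  by move=> w Hw; rewrite Hdiag eq_sym (negbTE Hw) !mulr0.
have Hmain N : (n < N)%N ->
    `|series (fun m => Mtilde Mf (X m)) N (inord 0) (inord n) - c ^+ n * a|
    <= rho ^+ n.+1 * S.
  move=> HN; rewrite /series /= summxE.
  rewrite (big_cat_nat (leq0n n) (ltnW HN)) /=.
  have Z : \sum_(0 <= i < n) Mtilde Mf (X i) (inord 0) (inord n) = 0.
    by rewrite big_nat_cond big1 // => m /andP[/andP[_ Hm] _]; apply: Hlow.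
  rewrite Z add0r.
  rewrite big_ltn // Hmid (addrC (c ^+ n * a)) addrK.
  apply: le_trans (ler_norm_sum _ _ _) _.
  apply: (@le_trans _ _ (\sum_(n.+1 <= m < N) rho ^+ n.+1 * u m)).
    apply: ler_sum_nat => m /andP[Hm _].
    apply: le_trans (HA m _ _) _.
    have h1 : (D * c) ^+ m <= rho ^+ n.+1 * r ^+ m.
      apply: (@le_trans _ _ ((rho * r) ^+ m)).
        apply: lerXn2r => //; rewrite nnegrE.
          by rewrite mulr_ge0 // ltW.
        by rewrite mulr_ge0 // ltW.
      rewrite exprMn; apply: ler_wpM2r; first by rewrite exprn_ge0 // ltW.
      by apply: ler_wiXn2l => //; exact: ltW.
    apply: le_trans (ler_wpM2r (P0 m) h1) _.
    by rewrite /u -mulrA (mulrC (r ^+ m)).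
  rewrite -mulr_sumr; apply: ler_wpM2l; first by rewrite exprn_ge0 // ltW.
  apply: le_trans (HS N).
  rewrite /series /= (big_cat_nat (leq0n n.+1) HN) /=.
  by apply: ler_wpDl => //; apply: sumr_ge0 => m _; exact: u0.
apply/eqP => HL0.
have Hg : (fun N => `|series (fun m => Mtilde Mf (X m)) N (inord 0) (inord n)
                      - c ^+ n * a|) @ \oo
          --> `|L (inord 0) (inord n) - c ^+ n * a|.
  by apply: cvg_norm; apply: cvgB => //; exact: cvg_cst.
have Hb : `|L (inord 0) (inord n) - c ^+ n * a| <= rho ^+ n.+1 * S.
  rewrite -(cvg_lim (@norm_hausdorff _ R^o) Hg).
  apply: limr_le; first exact: cvgP Hg.
  near=> N; apply: Hmain; near: N; exact: nbhs_infty_gt.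
move: Hb; rewrite /L HL0 mxE sub0r normrN normrM.
rewrite (ger0_norm (exprn_ge0 _ (ltW c0))).
have Hc : c ^+ n * `|a| = rho ^+ n * Q by rewrite /Q /c exprMn mulrA.
rewrite Hc exprSr -mulrA ler_pM2l ?exprn_gt0 // => H.
by move: rhoS; rewrite ltNge H.
Unshelve. all: by end_near.
Qed.
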